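(* Let $(X,d)$ be a metric space and let $F$ be a semiflow on $X$ with strong compact dynamics. Then: (1) $\mathcal R_{\mathcal C}=\mathcal R_{\mathcal S}$; denote this common set by $\mathcal R$. (2) For all $x,y\in\mathcal R$, one has $x\succcurlyeq_{\mathcal C} y$ if and only if $x\succcurlyeq_{\mathcal S} y$. (3) A set $M\subset X$ is a Conley node if and only if it is a shadow node. (4) The graphs coincide: $\Gamma_{\mathcal C}=\Gamma_{\mathcal S}$.
   Context: A semiflow on a metric space $(X,d)$ is a continuous map $F:[0,\infty)\times X\to X$, $(t,x)\mapsto F^t(x)$, with $F^0=\mathrm{id}$ and $F^{t+s}=F^t\circ F^s$ for all $t,s\ge 0$. A curve is piecewise continuous if it is continuous except at finitely many points, at which one-sided limits exist. Conley chains: for $\varepsilon>0$, $T>0$, an $(\varepsilon,T)$-chain from $x$ to $y$ is a finite sequence $x=x_0,x_1,\dots,x_N=y$ in $X$ with times $t_i\ge T$ such that $d(F^{t_i}(x_i),x_{i+1})<\varepsilon$ for $i=0,\dots,N-1$. Write $x\succcurlyeq_{\mathcal C} y$ if for every $\varepsilon>0$ and $T>0$ there is an $(\varepsilon,T)$-chain from $x$ to $y$. Shadow chains: for $T\ge1$, a piecewise continuous curve $\gamma:[0,T]\to X$ is $\varepsilon$-close to $F$ if $d(\gamma(t+\tau),F^\tau(\gamma(t)))<\varepsilon$ for every $\tau\in[0,1]$ and $t\in[0,T-\tau]$. An $\varepsilon$-chain (shadow chain) from $x$ to $y$ is a piecewise continuous $\gamma:[0,T]\to X$, $T\ge 1$,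 with $\gamma(0)=x$, $\gamma(T)=y$, $\gamma$ $\varepsilon$-close to $F$. Write $x\succcurlyeq_{\mathcal S} y$ if for every $\varepsilon>0$ there is an $\varepsilon$-chain from $x$ to $y$. For $\star\in\{\mathcal C,\mathcal S\}$: a point $x$ is $\star$-chain-recurrent if either $x$ is a fixed point of $F$ or there is $y\in X$ with $x\succcurlyeq_\star y$ and $y\succcurlyeq_\star x$ (such $x,y$ are called $\star$-chain-equivalent); $\mathcal R_\star$ is the set of $\star$-chain-recurrent points. A $\star$-node (Conley node for $\mathcal C$, shadow node for $\mathcal S$) is a maximal subset of $\mathcal R_\star$ whose points are mutually $\star$-chain-equivalent. $\Gamma_\star$ is the directed graph whose vertices are the $\star$-nodes, with an edge from node $M$ to node $N$ iff there are $x\in M$, $y\in N$ with $x\succcurlyeq_\star y$. Compact dynamics: for $G\subset X$, $N_\varepsilon(G)=\{y: d(y,G)<\varepsilon\}$ and $W_\varepsilon(G)=\bigcup_{t\ge0}F^t(N_\varepsilon(G))$. A set $G$ attracts $K$ if for every $\varepsilon>0$ there is $T>0$ with $F^t(K)\subset N_\varepsilon(G)$ for all $t\ge T$. The global attractor $\mathcal G$ of $F$, if it exists, is a maximal invariant compact subset of $X$ attracting every compact $K\subset X$. It is strong if there is $\varepsilon>0$ such that $\mathcal G$ attracts $N_\varepsilon(\mathcal G)$ and the map $(t,z)\mapsto F^t(z)$ is uniformly continuous on $[0,1]\times W_\varepsilon(\mathcal G)$. $F$ has strong compact dynamics if it has a strong global attractor. *)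

(* Defs.v *)
From Stdlib Require Import Reals List.
Open Scope R_scope.

Section Defs.
Context {X : Type} (d : X -> X -> R).

Definition is_metric : Prop :=
  (forall x y, 0 <= d x y) /\
  (forall x y, d x y = 0 <-> x = y) /\
  (forall x y, d x y = d y x) /\
  (forall x y z, d x z <= d x y + d y z).

(** Semiflow: continuous on [0,oo) x X (product topology), F^0 = id,
    F^(t+s) = F^t o F^s for t, s >= 0.  Values at negative times are irrelevant. *)
Definition is_semiflow (F : R -> X -> X) : Prop :=
  (forall t0 x0, 0 <= t0 -> forall eps, 0 < eps -> exists delta, 0 < delta /\
     forall t x, 0 <= t -> Rabs (t - t0) < delta -> d x x0 < delta ->
       d (F t x) (F t0 x0) < eps) /\
  (forall x, F 0 x = x) /\
  (forall t s x, 0 <= t -> 0 <= s -> F (t + s) x = F t (F s x)).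

Variable F : R -> X -> X.

Definition conley_chain (eps T : R) (x y : X) : Prop :=
  exists (N : nat) (xs : nat -> X) (ts : nat -> R),
    (1 <= N)%nat /\ xs 0%nat = x /\ xs N = y /\
    forall i, (i < N)%nat -> T <= ts i /\ d (F (ts i) (xs i)) (xs (S i)) < eps.

Definition conley_succ (x y : X) : Prop :=
  forall eps T, 0 < eps -> 0 < T -> conley_chain eps T x y.

Definition cont_within (g : R -> X) (T t : R) : Prop :=
  forall eps, 0 < eps -> exists delta, 0 < delta /\
    forall s, 0 <= s <= T -> Rabs (s - t) < delta -> d (g s) (g t) < eps.

Definition left_limit_exists (g : R -> X) (T p : R) : Prop :=
  exists L, forall eps, 0 < eps -> exists delta, 0 < delta /\
    forall s, 0 <= s <= T -> p - delta < s < p -> d (g s) L < eps.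

Definition right_limit_exists (g : R -> X) (T p : R) : Prop :=
  exists L, forall eps, 0 < eps -> exists delta, 0 < delta /\
    forall s, 0 <= s <= T -> p < s < p + delta -> d (g s) L < eps.

Definition piecewise_continuous (g : R -> X) (T : R) : Prop :=
  exists P : list R,
    (forall t, 0 <= t <= T -> ~ In t P -> cont_within g T t) /\
    (forall p, In p P -> 0 <= p <= T ->
       (0 < p -> left_limit_exists g T p) /\ (p < T -> right_limit_exists g T p)).

Definition eps_close (eps T : R) (g : R -> X) : Prop :=
  forall tau t, 0 <= tau <= 1 -> 0 <= t <= T - tau ->
    d (g (t + tau)) (F tau (g t)) < eps.

Definition shadow_chain (eps : R) (x y : X) : Prop :=
  exists (T : R) (g : R -> X),
    1 <= T /\ piecewise_continuous g T /\ g 0 = x /\ g T = y /\ eps_close eps T g.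

Definition shadow_succ (x y : X) : Prop :=
  forall eps, 0 < eps -> shadow_chain eps x y.

Definition is_fixed (x : X) : Prop := forall t, 0 <= t -> F t x = x.

Definition chain_recurrent (succ : X -> X -> Prop) (x : X) : Prop :=
  is_fixed x \/ exists y, succ x y /\ succ y x.

Definition mutually_equiv (succ : X -> X -> Prop) (M : X -> Prop) : Prop :=
  forall x y, M x -> M y -> succ x y /\ succ y x.

Definition is_node (succ : X -> X -> Prop) (M : X -> Prop) : Prop :=
  (forall x, M x -> chain_recurrent succ x) /\ mutually_equiv succ M /\
  (forall M' : X -> Prop, (forall x, M x -> M' x) ->
     (forall x, M' x -> chain_recurrent succ x) -> mutually_equiv succ M' ->
     forall x, M' x -> M x).

Definition graph_vertex (succ : X -> X -> Prop) (M : X -> Prop) : Prop :=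
  is_node succ M.

Definition graph_edge (succ : X -> X -> Prop) (M N : X -> Prop) : Prop :=
  is_node succ M /\ is_node succ N /\ exists x y, M x /\ N y /\ succ x y.

Definition nbhd (eps : R) (G : X -> Prop) : X -> Prop :=
  fun y => exists g, G g /\ d y g < eps.

Definition W_set (eps : R) (G : X -> Prop) : X -> Prop :=
  fun z => exists t y, 0 <= t /\ nbhd eps G y /\ z = F t y.

Definition attracts (G K : X -> Prop) : Prop :=
  forall eps, 0 < eps -> exists T, 0 < T /\
    forall t z, T <= t -> K z -> nbhd eps G (F t z).

Definition is_open (U : X -> Prop) : Prop :=
  forall x, U x -> exists r, 0 < r /\ forall y, d x y < r -> U y.

Definition is_compact (K : X -> Prop) : Prop :=
  forall (I : Type) (U : I -> X -> Prop), (forall i, is_open (U i)) ->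
    (forall x, K x -> exists i, U i x) ->
    exists l : list I, forall x, K x -> exists i, In i l /\ U i x.

Definition is_invariant (G : X -> Prop) : Prop :=
  forall t, 0 <= t ->
    (forall x, G x -> G (F t x)) /\ (forall y, G y -> exists x, G x /\ F t x = y).

Definition is_global_attractor (G : X -> Prop) : Prop :=
  is_compact G /\ is_invariant G /\
  (forall K, is_compact K -> attracts G K) /\
  (forall H, is_compact H -> is_invariant H -> forall x, H x -> G x).

Definition is_strong_global_attractor (G : X -> Prop) : Prop :=
  is_global_attractor G /\
  exists eps, 0 < eps /\ attracts G (nbhd eps G) /\
    forall e, 0 < e -> exists delta, 0 < delta /\
      forall t s z w, 0 <= t <= 1 -> 0 <= s <= 1 ->
        W_set eps G z -> W_set eps G w ->
        Rabs (t - s) < delta -> d z w < delta -> d (F t z) (F s w) < e.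

Definition strong_compact_dynamics : Prop :=
  exists G, is_strong_global_attractor G.

End Defs.

(* Main.v *)
Require Import Defs.
From Stdlib Require Import Reals List Lra Lia Classical ZArith.
Open Scope R_scope.

Lemma nat_above : forall r : R, exists n : nat, r < INR n.
Proof.
  intro r. destruct (INR_archimed 1 r) as [n Hn]; [lra|].
  exists n. lra.
Qed.

Lemma inv_small : forall r, 0 < r -> exists n : nat, / INR (S n) < r.
Proof.
  intros r Hr. destruct (archimed_cor1 r Hr) as [N [HN HN0]].
  destruct N as [|n]; [lia|]. exists n. exact HN.
Qed.

Section Main.
Context {X : Type} (d : X -> X -> R) (F : R -> X -> X).
Hypothesis Hd : is_metric d.
Hypothesis HF : is_semiflow d F.

Lemma d_refl : forall x, d x x = 0.
Proof. intro x. destruct Hd as [_ [H _]]. apply H. reflexivity. Qed.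
Lemma d_sym : forall x y, d x y = d y x.
Proof. destruct Hd as [_ [_ [H _]]]. exact H. Qed.
Lemma d_tri : forall x y z, d x z <= d x y + d y z.
Proof. destruct Hd as [_ [_ [_ H]]]. exact H. Qed.
Lemma d_pos : forall x y, 0 <= d x y.
Proof. destruct Hd as [H _]. exact H. Qed.
Lemma F0 : forall x, F 0 x = x.
Proof. destruct HF as [_ [H _]]. exact H. Qed.
Lemma Fsg : forall t s x, 0 <= t -> 0 <= s -> F (t + s) x = F t (F s x).
Proof. destruct HF as [_ [_ H]]. exact H. Qed.
Lemma Fcont : forall t0 x0, 0 <= t0 -> forall eps, 0 < eps -> exists delta, 0 < delta /\
     forall t x, 0 <= t -> Rabs (t - t0) < delta -> d x x0 < delta ->
       d (F t x) (F t0 x0) < eps.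
Proof. destruct HF as [H _]. exact H. Qed.

Lemma compact_closed : forall (K : X -> Prop) x, is_compact d K ->
  (forall e, 0 < e -> nbhd d e K x) -> K x.
Proof.
  intros K x HK Hn. apply NNPP. intro Hx.
  set (U := fun (n : nat) (z : X) => / INR (S n) < d z x).
  destruct (HK nat U) as [l Hl].
  - intros n z Hz. exists (d z x - / INR (S n)). split; [unfold U in Hz; lra|].
    intros y Hy. unfold U in *. pose proof (d_tri z y x). lra.
  - intros z Hz. assert (0 < d z x).
    { destruct (Rle_lt_or_eq_dec 0 (d z x) (d_pos z x)) as [h|h]; auto.
      exfalso. apply Hx. destruct Hd as [_ [Hdd _]]. assert (h' : z = x) by (apply Hdd; auto). subst. exact Hz. }
    destruct (inv_small _ H) as [n Hn']. exists n. exact Hn'.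
  - set (N := fold_right max 0%nat l).
    assert (HN : forall i, In i l -> (i <= N)%nat).
    { unfold N. clear. induction l as [|a l IH]; simpl; intros i Hi; [contradiction|].
      destruct Hi as [<-|Hi]; [lia|]. specialize (IH i Hi). lia. }
    assert (Hp : 0 < / INR (S N)). { apply Rinv_0_lt_compat. apply lt_0_INR. lia. }
    destruct (Hn _ Hp) as [g [Hg Hdg]].
    destruct (Hl g Hg) as [i [Hi Hui]]. unfold U in Hui.
    specialize (HN i Hi).
    assert (/ INR (S N) <= / INR (S i)).
    { apply Rinv_le_contravar. apply lt_0_INR. lia. apply le_INR. lia. }
    rewrite d_sym in Hdg. lra.
Qed.

Lemma singleton_compact : forall x, is_compact d (fun z => z = x).
Proof.
  intros x I U _ Hc. destruct (Hc x eq_refl) as [i Hi].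
  exists (i :: nil). intros z ->. exists i. split; [left; auto|auto].
Qed.


Fixpoint Hs (h : nat -> R) (n : nat) : R :=
  match n with O => 0 | S m => Hs h m + h m end.

Definition DC (eta : R) (a b : X) (n : nat) (z : nat -> X) (h : nat -> R) : Prop :=
  z 0%nat = a /\ z n = b /\
  forall j, (j < n)%nat -> 1/2 <= h j <= 1 /\ d (F (h j) (z j)) (z (S j)) < eta.

Section Chains.
Variables (eta : R) (n : nat) (z : nat -> X) (h : nat -> R).
Hypothesis Hst : forall j, (j < n)%nat -> 1/2 <= h j <= 1 /\ d (F (h j) (z j)) (z (S j)) < eta.

Lemma Hs_lb : forall p m, (m + p <= n)%nat -> INR p <= 2 * (Hs h (m + p) - Hs h m).
Proof.
  induction p as [|p IH]; intros m Hmp.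
  - rewrite Nat.add_0_r. cbn [INR]. lra.
  - rewrite Nat.add_succ_r. rewrite S_INR. cbn [Hs].
    specialize (IH m ltac:(lia)). destruct (Hst (m + p)%nat ltac:(lia)) as [[h1 h2] _]. lra.
Qed.

Lemma Hs_ub : forall p m, (m + p <= n)%nat -> Hs h (m + p) - Hs h m <= INR p.
Proof.
  induction p as [|p IH]; intros m Hmp.
  - rewrite Nat.add_0_r. cbn [INR]. lra.
  - rewrite Nat.add_succ_r. rewrite S_INR. cbn [Hs].
    specialize (IH m ltac:(lia)). destruct (Hst (m + p)%nat ltac:(lia)) as [[h1 h2] _]. lra.
Qed.

Lemma Hs_mono : forall m k, (m <= k <= n)%nat -> Hs h m <= Hs h k.
Proof.
  intros m k H. replace k with (m + (k - m))%nat by lia.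
  pose proof (Hs_lb (k - m) m ltac:(lia)). pose proof (pos_INR (k - m)). lra.
Qed.

Lemma find_fwd : forall T i k, 0 < T -> (i <= k <= n)%nat -> T <= Hs h k - Hs h i ->
  exists m, (i < m <= k)%nat /\ T <= Hs h m - Hs h i <= T + 1.
Proof.
  intros T i k HT. induction k as [|k IH]; intros Hik Hk.
  - assert (i = 0%nat) by lia. subst. simpl in Hk. lra.
  - destruct (Compare_dec.le_lt_dec i k) as [Hle|Hlt].
    + destruct (Rle_lt_dec T (Hs h k - Hs h i)) as [H1|H1].
      * destruct (IH ltac:(lia) H1) as [m [Hm1 Hm2]]. exists m. split; [lia|auto].
      * exists (S k). split; [lia|]. simpl. destruct (Hst k ltac:(lia)) as [[h1 h2] _].
        simpl in Hk. lra.
    + assert (i = S k) by lia. subst. lra.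
Qed.

Lemma find_bwd : forall T k p i, 0 < T -> (k <= n)%nat -> (i + p = k)%nat ->
  T <= Hs h k - Hs h i ->
  exists m, (i <= m < k)%nat /\ T <= Hs h k - Hs h m <= T + 1.
Proof.
  intros T k p. induction p as [|p IH]; intros i HT Hk Hip Hi.
  - rewrite Nat.add_0_r in Hip. subst. lra.
  - destruct (Rle_lt_dec T (Hs h k - Hs h (S i))) as [H1|H1].
    + destruct (IH (S i) HT Hk ltac:(lia) H1) as [m [Hm1 Hm2]]. exists m. split; [lia|auto].
    + exists i. split; [lia|]. split; [lra|]. simpl in H1.
      destruct (Hst i ltac:(lia)) as [[h1 h2] _]. lra.
Qed.

Variables (U : X -> Prop) (omega B : R).
Hypothesis HUfwd : forall a t, U a -> 0 <= t -> U (F t a).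
Hypothesis Hom : eta <= omega.
Hypothesis HUCB : forall a b, U a -> U b -> d a b < eta -> forall t, 0 <= t <= B ->
  d (F t a) (F t b) < omega.

Lemma tele : forall p m, (m + p <= n)%nat -> (forall j, (m <= j < m + p)%nat -> U (z j)) ->
  Hs h (m + p) - Hs h m <= B ->
  d (z (m + p)%nat) (F (Hs h (m + p) - Hs h m) (z m)) <= INR p * omega.
Proof.
  induction p as [|p IH]; intros m Hmp HU HB.
  - rewrite Nat.add_0_r. replace (Hs h m - Hs h m) with 0 by ring. rewrite F0, d_refl. simpl. lra.
  - rewrite Nat.add_succ_r in HB, Hmp |- *.
    destruct (Hst m ltac:(lia)) as [[h1 h2] hd].
    pose proof (Hs_lb p (S m) ltac:(lia)) as Hl. cbn [Nat.add] in Hl. pose proof (pos_INR p).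
    set (SS := Hs h (S (m + p)) - Hs h (S m)).
    assert (E : Hs h (S (m + p)) - Hs h m = SS + h m) by (unfold SS; simpl; ring).
    rewrite E in HB |- *. rewrite Fsg by (unfold SS in *; lra).
    specialize (IH (S m) ltac:(lia) ltac:(intros j Hj; apply HU; lia) ltac:(unfold SS in *; cbn [Nat.add]; lra)).
    cbn [Nat.add] in IH. fold SS in IH.
    pose proof (d_tri (z (S (m + p))) (F SS (z (S m))) (F SS (F (h m) (z m)))) as Ht.
    assert (d (F SS (z (S m))) (F SS (F (h m) (z m))) <= omega).
    { destruct p as [|p'].
      - unfold SS. rewrite Nat.add_0_r. replace (Hs h (S m) - Hs h (S m)) with 0 by ring. rewrite !F0.
        rewrite d_sym. lra.
      - left. apply HUCB.
        + apply HU. lia.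
        + apply HUfwd; [apply HU; lia|lra].
        + rewrite d_sym. exact hd.
        + unfold SS in *. lra. }
    rewrite S_INR. lra.
Qed.

End Chains.


Lemma Hs_ext : forall h1 h2 k, (forall j, (j < k)%nat -> h1 j = h2 j) -> Hs h1 k = Hs h2 k.
Proof.
  intros h1 h2 k. induction k as [|k IH]; intros E; simpl; [auto|].
  rewrite IH by (intros; apply E; lia). rewrite E by lia. auto.
Qed.

Lemma Hs_shift : forall h m p, Hs (fun j => h (m + j)%nat) p = Hs h (m + p) - Hs h m.
Proof.
  intros h m p. induction p as [|p IH]; simpl.
  - rewrite Nat.add_0_r. ring.
  - rewrite IH. rewrite Nat.add_succ_r. simpl. ring.
Qed.

Lemma DC_shift : forall eta a b n z h m, DC eta a b n z h -> (m <= n)%nat ->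
  DC eta (z m) b (n - m) (fun j => z (m + j)%nat) (fun j => h (m + j)%nat).
Proof.
  intros eta a b n z h m [H0 [Hn Hst]] Hm. split; [rewrite Nat.add_0_r; auto|]. split.
  - replace (m + (n - m))%nat with n by lia. auto.
  - intros j Hj. rewrite Nat.add_succ_r. apply Hst. lia.
Qed.

Lemma DC_concat : forall eta a b c n1 z1 h1 n2 z2 h2,
  DC eta a b n1 z1 h1 -> DC eta b c n2 z2 h2 ->
  exists z h, DC eta a c (n1 + n2) z h /\ Hs h (n1 + n2) = Hs h1 n1 + Hs h2 n2.
Proof.
  intros eta a b c n1 z1 h1 n2 z2 h2 [A0 [An Ast]] [B0 [Bn Bst]].
  exists (fun j => if (j <=? n1)%nat then z1 j else z2 (j - n1)%nat).
  exists (fun j => if (j <? n1)%nat then h1 j else h2 (j - n1)%nat).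
  split; [split; [|split]|].
  - simpl. auto.
  - destruct (Nat.leb_spec (n1 + n2) n1).
    + assert (n2 = 0%nat) by lia. subst. rewrite Nat.add_0_r. congruence.
    + replace (n1 + n2 - n1)%nat with n2 by lia. auto.
  - intros j Hj. destruct (Nat.ltb_spec j n1).
    + destruct (Nat.leb_spec j n1); [|lia]. destruct (Nat.leb_spec (S j) n1); [|lia].
      apply Ast. auto.
    + destruct (Nat.leb_spec (S j) n1); [lia|].
      replace (S j - n1)%nat with (S (j - n1)) by lia.
      assert (E : (if (j <=? n1)%nat then z1 j else z2 (j - n1)%nat) = z2 (j - n1)%nat).
      { destruct (Nat.leb_spec j n1); auto. assert (j = n1) by lia. subst.
        rewrite Nat.sub_diag. congruence. }
      rewrite E. apply Bst. lia.
  - assert (E1 : forall k, (k <= n1)%nat -> Hs (fun j => if (j <? n1)%nat then h1 j else h2 (j - n1)%nat) k = Hs h1 k).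
    { intros k Hk. apply Hs_ext. intros j Hj. destruct (Nat.ltb_spec j n1); [auto|lia]. }
    assert (E2 : forall p, Hs (fun j => if (j <? n1)%nat then h1 j else h2 (j - n1)%nat) (n1 + p) = Hs h1 n1 + Hs h2 p).
    { induction p as [|p IH].
      - rewrite Nat.add_0_r. rewrite E1 by lia. simpl. ring.
      - rewrite Nat.add_succ_r. simpl. rewrite IH. destruct (Nat.ltb_spec (n1 + p) n1); [lia|].
        replace (n1 + p - n1)%nat with p by lia. ring. }
    apply E2.
Qed.

Lemma conley_single : forall eps T a b t, T <= t -> d (F t a) b < eps -> conley_chain d F eps T a b.
Proof.
  intros eps T a b t Ht Hd'. exists 1%nat, (fun i => match i with O => a | _ => b end), (fun _ => t).
  split; [lia|]. split; [auto|]. split; [auto|]. intros i Hi. assert (i = 0%nat) by lia. subst. auto.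
Qed.

Lemma conley_prepend : forall eps T a b c t, T <= t -> d (F t a) b < eps ->
  conley_chain d F eps T b c -> conley_chain d F eps T a c.
Proof.
  intros eps T a b c t Ht Hd' [N [xs [ts [HN [H0 [HNc Hst]]]]]].
  exists (S N), (fun i => match i with O => a | S i => xs i end), (fun i => match i with O => t | S i => ts i end).
  split; [lia|]. split; [auto|]. split; [auto|].
  intros [|i] Hi; [rewrite H0; auto|]. apply Hst. lia.
Qed.


Variable G : X -> Prop.
Hypothesis HG : is_global_attractor d F G.
Variable e0 : R.
Hypothesis He0 : 0 < e0.
Hypothesis HattN : attracts d F G (nbhd d e0 G).
Hypothesis HUC : forall e, 0 < e -> exists delta, 0 < delta /\
      forall t s z w, 0 <= t <= 1 -> 0 <= s <= 1 ->
        W_set d F e0 G z -> W_set d F e0 G w ->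
        Rabs (t - s) < delta -> d z w < delta -> d (F t z) (F s w) < e.

Notation UU := (W_set d F e0 G).
Notation NN := (nbhd d e0 G).

Lemma N_U : forall x, NN x -> UU x.
Proof. intros x Hx. exists 0, x. split; [lra|]. split; auto. rewrite F0. auto. Qed.

Lemma G_N : forall x, G x -> NN x.
Proof. intros x Hx. exists x. split; auto. rewrite d_refl. lra. Qed.

Lemma nbhd_mono : forall e e' x, e <= e' -> nbhd d e G x -> nbhd d e' G x.
Proof. intros e e' x He [g [Hg Hdg]]. exists g. split; auto. lra. Qed.

Lemma U_fwd : forall a t, UU a -> 0 <= t -> UU (F t a).
Proof.
  intros a t [s [y [Hs [Hy ->]]]] Ht. exists (t + s), y. split; [lra|]. split; auto.
  rewrite Fsg by lra. auto.
Qed.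

Lemma G_inv : forall x t, G x -> 0 <= t -> G (F t x).
Proof. intros x t Hx Ht. destruct HG as [_ [Hinv _]]. apply (Hinv t Ht). auto. Qed.

Lemma G_compact : is_compact d G.
Proof. destruct HG as [H _]. exact H. Qed.

Lemma UC1 : forall e, 0 < e -> exists delta, 0 < delta /\ forall a b, UU a -> UU b -> d a b < delta ->
  forall t, 0 <= t <= 1 -> d (F t a) (F t b) < e.
Proof.
  intros e He. destruct (HUC e He) as [dl [Hdl H]]. exists dl. split; auto.
  intros a b Ha Hb Hab t Ht. apply H; auto. replace (t - t) with 0 by ring. rewrite Rabs_R0. auto.
Qed.

Lemma UC_nat : forall n : nat, forall e, 0 < e -> exists delta, 0 < delta /\
  forall a b, UU a -> UU b -> d a b < delta -> forall t, 0 <= t <= INR n -> d (F t a) (F t b) < e.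
Proof.
  induction n as [|n IH]; intros e He.
  - exists e. split; auto. intros a b _ _ Hab t Ht. simpl in Ht. assert (t = 0) by lra. subst.
    rewrite !F0. auto.
  - destruct (UC1 e He) as [d1 [Hd1 H1]].
    destruct (IH e He) as [d2 [Hd2 H2]].
    destruct (UC1 d2 Hd2) as [d3 [Hd3 H3]].
    exists (Rmin d1 d3). split; [apply Rmin_glb_lt; auto|].
    intros a b Ha Hb Hab t Ht. rewrite S_INR in Ht.
    destruct (Rle_lt_dec t 1) as [Ht1|Ht1].
    + pose proof (Rmin_l d1 d3). apply H1; auto; lra.
    + replace t with ((t - 1) + 1) by ring. rewrite !Fsg by lra.
      pose proof (Rmin_r d1 d3).
      apply H2; try (apply U_fwd; auto; lra).
      apply H3; auto; lra.
      lra.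
Qed.

Lemma UC_real : forall B e, 0 < e -> exists delta, 0 < delta /\
  forall a b, UU a -> UU b -> d a b < delta -> forall t, 0 <= t <= B -> d (F t a) (F t b) < e.
Proof.
  intros B e He. destruct (nat_above B) as [n Hn]. destruct (UC_nat n e He) as [dl [Hdl H]].
  exists dl. split; auto. intros. apply H; auto. lra.
Qed.

Lemma attr_single : forall x e, 0 < e -> exists T, 0 < T /\ forall t, T <= t -> nbhd d e G (F t x).
Proof.
  intros x e He. destruct HG as [_ [_ [Hatt _]]].
  destruct (Hatt _ (singleton_compact x) e He) as [T [HT H]]. exists T. split; auto.
Qed.

Lemma fixed_G : forall x, is_fixed F x -> G x.
Proof.
  intros x Hx. destruct HG as [_ [_ [_ Hmax]]]. apply (Hmax (fun z => z = x)); auto.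
  - apply singleton_compact.
  - intros t Ht. split.
    + intros z ->. apply Hx; auto.
    + intros y ->. exists x. split; auto.
Qed.

Lemma stayB : forall e, 0 < e -> e <= e0 -> exists eta delta0, 0 < eta /\ 0 < delta0 /\
  forall a b n z h g, DC eta a b n z h -> G g -> d a g < delta0 ->
  forall k, (k <= n)%nat -> nbhd d e G (z k).
Proof.
  intros e He Hee0.
  destruct (HattN (e/2) ltac:(lra)) as [Ta [HTa Hatt]].
  set (B := Ta + 1).
  set (om := (e/2) / (2 * B + 1)).
  assert (Hom : 0 < om). { unfold om, B. apply Rdiv_lt_0_compat; lra. }
  assert (Hom2 : 2 * B * om < e / 2).
  { unfold om. assert (0 < 2 * B + 1) by (unfold B; lra).
    apply (Rmult_lt_reg_r (2 * B + 1)); auto. field_simplify; [|lra]. unfold B in *. nra. }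
  destruct (UC_real B om Hom) as [dw [Hdw Hw]].
  destruct (UC_real B (e/2) ltac:(lra)) as [d1 [Hd1 H1]].
  exists (Rmin dw om), (Rmin d1 e0).
  split; [apply Rmin_glb_lt; auto|]. split; [apply Rmin_glb_lt; auto|].
  intros a b n z h g [Z0 [Zn Hst]] Hg Hag k.
  pose proof (Rmin_l dw om). pose proof (Rmin_r dw om).
  pose proof (Rmin_l d1 e0). pose proof (Rmin_r d1 e0).
  assert (HUCB : forall a0 b0, UU a0 -> UU b0 -> d a0 b0 < Rmin dw om -> forall t, 0 <= t <= B ->
     d (F t a0) (F t b0) < om).
  { intros. apply Hw; auto. lra. }
  induction k as [k IHk] using Wf_nat.lt_wf_ind. intros Hkn.
  assert (HUk : forall j, (j < k)%nat -> UU (z j)).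
  { intros j Hj. apply N_U. apply (nbhd_mono e); auto. apply IHk; lia. }
  destruct (Rlt_le_dec (Hs h k) Ta) as [Hk|Hk].
  - pose proof (tele _ _ _ _ Hst UU om B U_fwd ltac:(lra) HUCB k 0 ltac:(lia)
       ltac:(intros; apply HUk; lia)) as Ht.
    cbn [Nat.add Hs] in Ht. rewrite Rminus_0_r in Ht.
    pose proof (Hs_lb _ _ _ _ Hst k 0 ltac:(lia)) as Hl. cbn [Nat.add Hs] in Hl.
    rewrite Rminus_0_r in Hl.
    assert (Hpos : 0 <= Hs h k) by (pose proof (pos_INR k); lra).
    specialize (Ht ltac:(unfold B; lra)).
    assert (Hkb : INR k * om < e/2).
    { apply Rle_lt_trans with (2 * B * om); auto. apply Rmult_le_compat_r; [lra|]. unfold B; lra. }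
    assert (HaN : NN a) by (exists g; split; auto; lra).
    assert (Hfg : d (F (Hs h k) a) (F (Hs h k) g) < e/2).
    { apply H1; auto. apply N_U; auto. apply N_U, G_N; auto. lra. unfold B; lra. }
    exists (F (Hs h k) g). split; [apply G_inv; auto|].
    rewrite Z0 in Ht. pose proof (d_tri (z k) (F (Hs h k) a) (F (Hs h k) g)). lra.
  - destruct (find_bwd _ _ _ _ Hst Ta k k 0 HTa Hkn ltac:(lia) ltac:(simpl; lra)) as [m [Hm1 [Hm2 Hm3]]].
    assert (HzmN : NN (z m)) by (apply (nbhd_mono e); auto; apply IHk; lia).
    destruct (Hatt (Hs h k - Hs h m) (z m) Hm2 HzmN) as [g' [Hg' Hdg']].
    pose proof (tele _ _ _ _ Hst UU om B U_fwd ltac:(lra) HUCB (k - m) m ltac:(lia)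
       ltac:(intros; apply HUk; lia)) as Ht.
    pose proof (Hs_lb _ _ _ _ Hst (k - m) m ltac:(lia)) as Hl.
    replace (m + (k - m))%nat with k in Ht, Hl by lia.
    specialize (Ht ltac:(unfold B; lra)).
    assert (Hkb : INR (k - m) * om < e/2).
    { apply Rle_lt_trans with (2 * B * om); auto. apply Rmult_le_compat_r; [lra|]. unfold B; lra. }
    exists g'. split; auto.
    pose proof (d_tri (z k) (F (Hs h k - Hs h m) (z m)) g'). lra.
Qed.


Lemma near_step : forall a b s r, d a b < r -> nbhd d s G a -> nbhd d (s + r) G b.
Proof.
  intros a b s r Hab [g [Hg Hag]]. exists g. split; auto.
  pose proof (d_tri b a g). rewrite (d_sym b a) in H. lra.
Qed.

Lemma conley_to_G : forall w x, conley_succ d F w x -> G x.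
Proof.
  intros w x Hc. apply (compact_closed G x G_compact). intros e He.
  set (e1 := Rmin e e0). assert (He1 : 0 < e1) by (apply Rmin_glb_lt; auto).
  destruct (attr_single w (e1/2) ltac:(lra)) as [Tw [HTw Hw]].
  destruct (HattN (e1/2) ltac:(lra)) as [Ta [HTa Ha]].
  destruct (Hc (e1/2) (Rmax Tw Ta) ltac:(lra) ltac:(pose proof (Rmax_l Tw Ta); lra))
    as [N [xs [ts [HN [H0 [HNx Hst]]]]]].
  assert (Hall : forall i, (1 <= i <= N)%nat -> nbhd d e1 G (xs i)).
  { induction i as [|i IH]; intros Hi; [lia|].
    destruct (Hst i ltac:(lia)) as [Hti Hdi].
    replace e1 with (e1/2 + e1/2) by field.
    apply (near_step (F (ts i) (xs i))); auto.
    destruct i as [|i'].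
    - rewrite H0. apply Hw. pose proof (Rmax_l Tw Ta). lra.
    - apply Ha. pose proof (Rmax_r Tw Ta). lra.
      apply (nbhd_mono e1). unfold e1; apply Rmin_r. apply IH. lia. }
  rewrite <- HNx. apply (nbhd_mono e1). unfold e1; apply Rmin_l. apply Hall. lia.
Qed.

Lemma recC_G : forall x, chain_recurrent F (conley_succ d F) x -> G x.
Proof.
  intros x [Hfix|[y [Hxy Hyx]]]. apply fixed_G; auto. apply (conley_to_G y x Hyx).
Qed.

Lemma discretize : forall eta x y, shadow_chain d F eta x y ->
  exists n z h, DC eta x y n z h /\ (1 <= n)%nat.
Proof.
  intros eta x y [L [g [HL [_ [G0 [GL Hcl]]]]]].
  destruct (archimed L) as [A1 A2].
  assert (Hup : (0 <= up L)%Z). { apply le_IZR. simpl. lra. }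
  set (n := Z.to_nat (up L)).
  assert (Hn : INR n = IZR (up L)). { unfold n. rewrite INR_IZR_INZ. rewrite Z2Nat.id; auto. }
  assert (Hnpos : 0 < INR n) by lra.
  set (hh := L / INR n).
  assert (Hh1 : hh <= 1). { unfold hh. apply Rmult_le_reg_r with (INR n); auto. field_simplify; lra. }
  assert (Hh2 : 1/2 <= hh). { unfold hh. apply Rmult_le_reg_r with (INR n); auto. field_simplify; lra. }
  exists n, (fun j => g (INR j * hh)), (fun _ => hh). split; [split; [|split]|].
  - simpl. rewrite Rmult_0_l. auto.
  - replace (INR n * hh) with L. auto. unfold hh. field. lra.
  - intros j Hj. split; [lra|]. rewrite S_INR.
    replace ((INR j + 1) * hh) with (INR j * hh + hh) by ring.
    rewrite d_sym. apply Hcl; [lra|]. pose proof (pos_INR j).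
    assert (INR (S j) <= INR n) by (apply le_INR; lia). rewrite S_INR in H0.
    split; [nra|]. replace L with (INR n * hh) by (unfold hh; field; lra). nra.
  - assert (Hn1 : 1 <= INR n) by lra.
    destruct n as [|n']; [simpl in Hn1; lra|lia].
Qed.

Definition loop (x : X) : Prop := forall eta, 0 < eta -> exists n z h, DC eta x x n z h /\ (1 <= n)%nat.

Lemma loops_long : forall x, loop x -> forall eta, 0 < eta -> forall k : nat,
  exists n z h, DC eta x x n z h /\ INR k / 2 <= Hs h n.
Proof.
  intros x Hl eta Heta. induction k as [|k IH].
  - exists 0%nat, (fun _ => x), (fun _ => 1). split; [split; [|split]|]; auto.
    + intros; lia.
    + simpl. lra.
  - destruct IH as [n1 [z1 [h1 [HD1 Hk]]]].
    destruct (Hl eta Heta) as [n2 [z2 [h2 [HD2 Hn2]]]].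
    destruct (DC_concat _ _ _ _ _ _ _ _ _ _ HD1 HD2) as [z [h [HD E]]].
    exists (n1 + n2)%nat, z, h. split; auto. rewrite E.
    destruct HD2 as [_ [_ Hst2]].
    pose proof (Hs_lb _ _ _ _ Hst2 n2 0 ltac:(lia)) as Hl2. cbn [Nat.add Hs] in Hl2.
    assert (1 <= INR n2) by (apply (le_INR 1); auto). rewrite S_INR. lra.
Qed.


Lemma merge : forall eps T, 0 < eps -> 0 < T -> exists eta, 0 < eta /\
  forall x y n z h, G x -> DC eta x y n z h -> T <= Hs h n -> conley_chain d F eps T x y.
Proof.
  intros eps T Heps HT.
  destruct (stayB e0 He0 (Rle_refl _)) as [etaB [d0 [HetaB [Hd0 HB]]]].
  set (B := 2 * T + 1).
  set (om := eps / (2 * B + 1)).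
  assert (Hom : 0 < om). { unfold om, B. apply Rdiv_lt_0_compat; lra. }
  assert (Hom2 : 2 * B * om < eps).
  { unfold om. assert (0 < 2 * B + 1) by (unfold B; lra).
    apply (Rmult_lt_reg_r (2 * B + 1)); auto. field_simplify; [|lra]. unfold B in *. nra. }
  destruct (UC_real B om Hom) as [dw [Hdw Hw]].
  set (eta := Rmin etaB (Rmin dw om)).
  assert (E1 : eta <= etaB) by apply Rmin_l.
  assert (E2 : eta <= dw) by (unfold eta; pose proof (Rmin_l dw om); pose proof (Rmin_r etaB (Rmin dw om)); lra).
  assert (E3 : eta <= om) by (unfold eta; pose proof (Rmin_r dw om); pose proof (Rmin_r etaB (Rmin dw om)); lra).
  exists eta. split; [unfold eta; repeat apply Rmin_glb_lt; auto|].
  intros x y n z h Gx HD HTn.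
  assert (HDB : DC etaB x y n z h).
  { destruct HD as [A [B' C]]. split; auto. split; auto. intros j Hj. destruct (C j Hj). split; auto. lra. }
  assert (HU : forall k, (k <= n)%nat -> UU (z k)).
  { intros k Hk. apply N_U. apply (HB x y n z h x HDB Gx); auto. rewrite d_refl. lra. }
  destruct HD as [Z0 [Zn Hst]].
  assert (HUCB : forall a0 b0, UU a0 -> UU b0 -> d a0 b0 < eta -> forall t, 0 <= t <= B ->
     d (F t a0) (F t b0) < om).
  { intros. apply Hw; auto. lra. }
  assert (Tel : forall i k, (i <= k <= n)%nat -> Hs h k - Hs h i <= B ->
     d (F (Hs h k - Hs h i) (z i)) (z k) < eps).
  { intros i k Hik HBk.
    pose proof (tele _ _ _ _ Hst UU om B U_fwd E3 HUCB (k - i) i ltac:(lia)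
       ltac:(intros; apply HU; lia)) as Ht.
    pose proof (Hs_lb _ _ _ _ Hst (k - i) i ltac:(lia)) as Hl.
    replace (i + (k - i))%nat with k in Ht, Hl by lia.
    specialize (Ht HBk). rewrite d_sym.
    assert (INR (k - i) * om <= 2 * B * om) by (apply Rmult_le_compat_r; lra). lra. }
  assert (Main : forall q i, (i + q = n)%nat -> T <= Hs h n - Hs h i -> conley_chain d F eps T (z i) (z n)).
  { intro q. induction q as [q IH] using Wf_nat.lt_wf_ind. intros i Hiq HTi.
    destruct (Rlt_le_dec (Hs h n - Hs h i) B) as [Hs1|Hs1].
    - apply (conley_single eps T (z i) (z n) (Hs h n - Hs h i)); auto.
      apply Tel; [lia|lra].
    - destruct (find_fwd _ _ _ _ Hst T i n HT ltac:(lia) HTi) as [m [Hm1 [Hm2 Hm3]]].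
      apply (conley_prepend eps T (z i) (z m) (z n) (Hs h m - Hs h i)); auto.
      + apply Tel; [lia|unfold B; lra].
      + apply (IH (n - m)%nat); [lia|lia|unfold B in Hs1; lra]. }
  rewrite <- Z0, <- Zn. apply (Main n 0%nat); auto. simpl. lra.
Qed.

Lemma SC : forall x y, G x -> loop x -> shadow_succ d F x y -> conley_succ d F x y.
Proof.
  intros x y Gx Hl Hsh eps T Heps HT.
  destruct (merge eps T Heps HT) as [eta [Heta Hm]].
  destruct (discretize eta x y (Hsh eta Heta)) as [n1 [z1 [h1 [HD1 _]]]].
  destruct (nat_above (2 * T)) as [k Hk].
  destruct (loops_long x Hl eta Heta k) as [n2 [z2 [h2 [HD2 Hk2]]]].
  destruct (DC_concat _ _ _ _ _ _ _ _ _ _ HD2 HD1) as [z [h [HD E]]].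
  apply (Hm x y _ z h Gx HD). rewrite E.
  destruct HD1 as [_ [_ Hst1]].
  pose proof (Hs_lb _ _ _ _ Hst1 n1 0 ltac:(lia)) as Hl1. cbn [Nat.add Hs] in Hl1.
  pose proof (pos_INR n1). lra.
Qed.


Lemma cont_limits : forall (g : R -> X) T p, cont_within d g T p ->
  left_limit_exists d g T p /\ right_limit_exists d g T p.
Proof.
  intros g T p Hc. split; exists (g p); intros eps Heps; destruct (Hc eps Heps) as [dl [Hdl H]];
  exists dl; split; auto; intros s Hs Hsp; apply H; auto; apply Rabs_def1; lra.
Qed.

Lemma right_lim0 : forall (g : R -> X) b, piecewise_continuous d g b -> 0 < b ->
  right_limit_exists d g b 0.
Proof.
  intros g b [P [Hc Hl]] Hb. destruct (classic (In 0 P)) as [Hin|Hin].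
  - apply (Hl 0 Hin ltac:(lra)). auto.
  - apply cont_limits. apply Hc; auto. lra.
Qed.

Lemma pc_glue : forall (g1 g2 : R -> X) a b, 0 < a -> 0 <= b ->
  (forall t, 0 <= t <= a -> cont_within d g1 a t) -> piecewise_continuous d g2 b ->
  piecewise_continuous d (fun s => if Rlt_dec s a then g1 s else g2 (s - a)) (a + b).
Proof.
  intros g1 g2 a b Ha Hb Hc1 Hpc.
  pose proof Hpc as [P [Hc2 Hl2]].
  set (hh := fun s => if Rlt_dec s a then g1 s else g2 (s - a)).
  assert (LA : left_limit_exists d hh (a + b) a).
  { destruct (cont_limits g1 a a (Hc1 a ltac:(lra))) as [[L HL] _]. exists L.
    intros eps Heps. destruct (HL eps Heps) as [dl [Hdl H]]. exists dl. split; auto.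
    intros s Hs Hsp. unfold hh. destruct (Rlt_dec s a); [|lra]. apply H; auto; lra. }
  assert (RA : 0 < b -> right_limit_exists d hh (a + b) a).
  { intros Hb'. destruct (right_lim0 g2 b Hpc Hb') as [L HL]. exists L.
    intros eps Heps. destruct (HL eps Heps) as [dl [Hdl H]]. exists dl. split; auto.
    intros s Hs Hsp. unfold hh. destruct (Rlt_dec s a); [lra|]. apply H; lra. }
  assert (LOWc : forall p, 0 <= p < a -> left_limit_exists d hh (a + b) p /\ right_limit_exists d hh (a + b) p).
  { intros p Hp. destruct (cont_limits g1 a p (Hc1 p ltac:(lra))) as [[L1 HL1] [L2 HL2]].
    split.
    - exists L1. intros eps Heps. destruct (HL1 eps Heps) as [dl [Hdl H]]. exists dl. split; auto.
      intros s Hs Hsp. unfold hh. destruct (Rlt_dec s a); [|lra]. apply H; auto; lra.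
    - exists L2. intros eps Heps. destruct (HL2 eps Heps) as [dl [Hdl H]]. exists (Rmin dl (a - p)).
      split; [apply Rmin_glb_lt; lra|].
      intros s Hs Hsp. pose proof (Rmin_l dl (a - p)). pose proof (Rmin_r dl (a - p)).
      unfold hh. destruct (Rlt_dec s a); [|lra]. apply H; lra. }
  exists (a :: map (fun p => p + a) P). split.
  - intros t Ht Hnin. simpl in Hnin.
    assert (Hta : t <> a) by (intro; apply Hnin; left; auto).
    destruct (Rtotal_order t a) as [Hlt|[Heq|Hgt]]; [|contradiction|].
    + intros eps Heps. destruct (Hc1 t ltac:(lra) eps Heps) as [dl [Hdl H]].
      exists (Rmin dl (a - t)). split; [apply Rmin_glb_lt; lra|].
      intros s Hs Hst. pose proof (Rmin_l dl (a - t)). pose proof (Rmin_r dl (a - t)).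
      assert (Hsa : s < a). { apply Rabs_def2 in Hst. lra. }
      unfold hh. destruct (Rlt_dec s a); [|lra]. destruct (Rlt_dec t a); [|lra].
      apply H; [lra|lra].
    + assert (Hnin2 : ~ In (t - a) P).
      { intro Hin. apply Hnin. right. replace t with ((t - a) + a) by ring.
        apply (in_map (fun p => p + a)). auto. }
      intros eps Heps. destruct (Hc2 (t - a) ltac:(lra) Hnin2 eps Heps) as [dl [Hdl H]].
      exists (Rmin dl (t - a)). split; [apply Rmin_glb_lt; lra|].
      intros s Hs Hst. pose proof (Rmin_l dl (t - a)). pose proof (Rmin_r dl (t - a)).
      assert (Hsa : a < s). { apply Rabs_def2 in Hst. lra. }
      unfold hh. destruct (Rlt_dec s a); [lra|]. destruct (Rlt_dec t a); [lra|].
      apply H; [lra|]. replace (s - a - (t - a)) with (s - t) by ring. lra.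
  - intros p Hin Hp.
    destruct (Rtotal_order p a) as [Hlt|[Heq|Hgt]].
    + destruct (LOWc p ltac:(lra)). split; auto.
    + subst. split; auto. intros. apply RA. lra.
    + destruct Hin as [Hin|Hin]; [lra|].
      apply in_map_iff in Hin. destruct Hin as [q [Hq Hin]].
      assert (Hq' : q = p - a) by lra.
      destruct (Hl2 q Hin ltac:(lra)) as [HL HR]. split.
      * intros _. destruct (HL ltac:(lra)) as [L HLL]. exists L.
        intros eps Heps. destruct (HLL eps Heps) as [dl [Hdl H]]. exists (Rmin dl q).
        split; [apply Rmin_glb_lt; lra|].
        intros s Hs Hsp. pose proof (Rmin_l dl q). pose proof (Rmin_r dl q).
        unfold hh. destruct (Rlt_dec s a); [lra|]. apply H; lra.
      * intros Hpb. destruct (HR ltac:(lra)) as [L HLL]. exists L.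
        intros eps Heps. destruct (HLL eps Heps) as [dl [Hdl H]]. exists dl. split; auto.
        intros s Hs Hsp. unfold hh. destruct (Rlt_dec s a); [lra|]. apply H; lra.
Qed.

Lemma flow_cont : forall x a t, 0 <= t <= a -> cont_within d (fun s => F s x) a t.
Proof.
  intros x a t Ht eps Heps. destruct (Fcont t x ltac:(lra) eps Heps) as [dl [Hdl H]].
  exists dl. split; auto. intros s Hs Hst. apply H; auto. lra. rewrite d_refl. auto.
Qed.

Lemma CS : forall x y, G x -> conley_succ d F x y -> shadow_succ d F x y.
Proof.
  intros x y Gx Hc eps Heps.
  destruct (UC1 eps Heps) as [du [Hdu Hu]].
  destruct (HattN (e0/2) ltac:(lra)) as [Ta [HTa Ha]].
  set (eta := Rmin du (e0/2)).
  assert (Heta : 0 < eta) by (apply Rmin_glb_lt; lra).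
  assert (Heta1 : eta <= du) by apply Rmin_l. assert (Heta2 : eta <= e0/2) by apply Rmin_r.
  destruct (Hc eta (Rmax Ta 2) Heta ltac:(pose proof (Rmax_r Ta 2); lra))
    as [N [xs [ts [HN [Hx0 [HNy Hst]]]]]].
  assert (HNN : forall i, (i <= N)%nat -> NN (xs i)).
  { induction i as [|i IH]; intros Hi.
    - rewrite Hx0. apply G_N; auto.
    - destruct (Hst i ltac:(lia)) as [Ht Hdi].
      replace e0 with (e0/2 + e0/2) by field.
      apply (near_step (F (ts i) (xs i))). lra.
      apply Ha; [pose proof (Rmax_l Ta 2); lra|]. apply IH. lia. }
  assert (Curve : forall q i, (i + q = N)%nat -> exists L g, 0 <= L /\ (q = 0%nat \/ 2 <= L) /\
     g 0 = xs i /\ g L = y /\ piecewise_continuous d g L /\ eps_close d F eps L g /\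
     (forall r, 0 <= r <= 1 -> r <= L -> g r = F r (xs i))).
  { induction q as [|q IH]; intros i Hiq.
    - rewrite Nat.add_0_r in Hiq. subst i.
      exists 0, (fun _ => y). split; [lra|]. split; [auto|]. split; [auto|]. split; [auto|].
      split; [|split].
      + exists nil. split.
        * intros t Ht _ e He. exists 1. split; [lra|]. intros. rewrite d_refl. auto.
        * intros p Hin. destruct Hin.
      + intros tau t Htau Ht. assert (tau = 0) by lra. subst. rewrite F0, d_refl. auto.
      + intros r Hr HrL. assert (r = 0) by lra. subst. rewrite F0. auto.
    - destruct (IH (S i) ltac:(lia)) as [L [g [HL [_ [Hg0 [HgL [Hpc [Hcl Hfl]]]]]]]].
      destruct (Hst i ltac:(lia)) as [Hti Hdi].
      assert (Ht2 : 2 <= ts i) by (pose proof (Rmax_r Ta 2); lra).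
      set (t0 := ts i) in *.
      exists (t0 + L), (fun s => if Rlt_dec s t0 then F s (xs i) else g (s - t0)).
      split; [lra|]. split; [right; lra|]. split; [|split; [|split; [|split]]].
      + destruct (Rlt_dec 0 t0); [|lra]. apply F0.
      + destruct (Rlt_dec (t0 + L) t0); [lra|]. replace (t0 + L - t0) with L by ring. auto.
      + apply pc_glue; auto; [lra|]. intros. apply flow_cont. auto.
      + intros tau t Htau Ht.
        destruct (Rlt_dec (t + tau) t0) as [H1|H1]; destruct (Rlt_dec t t0) as [H2|H2].
        * rewrite <- Fsg by lra. rewrite Rplus_comm, d_refl. auto.
        * lra.
        * rewrite Hfl by lra. replace (F tau (F t (xs i))) with (F (t + tau - t0) (F t0 (xs i))).
          -- apply Hu; [apply N_U, HNN; lia| apply U_fwd; [apply N_U, HNN; lia|lra]| |lra].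
             rewrite d_sym. lra.
          -- rewrite <- !Fsg by lra. f_equal. ring.
        * replace (t + tau - t0) with ((t - t0) + tau) by ring. apply Hcl; lra.
      + intros r Hr HrL. destruct (Rlt_dec r t0); [auto|lra]. }
  destruct (Curve N 0%nat ltac:(lia)) as [L [g [HL [HL2 [Hg0 [HgL [Hpc [Hcl _]]]]]]]].
  destruct HL2 as [HL2|HL2]; [lia|].
  exists L, g. split; [lra|]. split; auto. split; [rewrite Hg0; auto|]. split; auto.
Qed.


Lemma real_ind : forall (P : R -> Prop) b, 0 <= b -> (forall s, s < 0 -> P s) ->
  (forall s s', s' <= s -> P s -> P s') ->
  (forall s0, 0 <= s0 <= b -> exists dl, 0 < dl /\ (P (s0 - dl) -> P (s0 + dl))) -> P b.
Proof.
  intros P b Hb Hneg Hdown Hstep.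
  set (E := fun s => s <= b /\ P s).
  assert (HbE : bound E) by (exists b; intros s [Hs _]; auto).
  assert (HnE : exists s, E s) by (exists (-1); split; [lra|apply Hneg; lra]).
  destruct (completeness E HbE HnE) as [m [Hub Hlub]].
  assert (Hmb : m <= b) by (apply Hlub; intros s [Hs _]; auto).
  destruct (Rlt_le_dec m 0) as [Hm0|Hm0].
  - destruct (Hstep 0 ltac:(lra)) as [dl [Hdl H]].
    assert (Pd : P dl) by (replace dl with (0 + dl) by ring; apply H; apply Hneg; lra).
    destruct (Rle_lt_dec b dl) as [Hbd|Hbd].
    + apply (Hdown dl); auto.
    + assert (dl <= m) by (apply Hub; split; [lra|auto]). lra.
  - destruct (Hstep m ltac:(lra)) as [dl [Hdl H]].
    assert (Pm : P (m - dl)).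
    { apply NNPP. intro Hn.
      assert (is_upper_bound E (m - dl)).
      { intros s [Hs Ps]. destruct (Rle_lt_dec s (m - dl)) as [h|h]; auto.
        exfalso. apply Hn. apply (Hdown s); auto; lra. }
      assert (m <= m - dl) by (apply Hlub; auto). lra. }
    specialize (H Pm).
    destruct (Rle_lt_dec b (m + dl)) as [Hbd|Hbd].
    + apply (Hdown (m + dl)); auto.
    + assert (m + dl <= m) by (apply Hub; split; [lra|auto]). lra.
Qed.

Lemma Qp : forall p e, 0 < e -> exists dl, 0 < dl /\
  forall t, 0 <= t <= 1 -> forall z, d z p < dl -> d (F t z) (F t p) < e.
Proof.
  intros p e He.
  set (P := fun s => exists dl, 0 < dl /\ forall t, 0 <= t <= s -> forall z, d z p < dl -> d (F t z) (F t p) < e).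
  assert (P1 : P 1).
  { apply real_ind; [lra| | |].
    - intros s Hs. exists 1. split; [lra|]. intros. lra.
    - intros s s' Hss [dl [Hdl H]]. exists dl. split; auto. intros. apply H; auto; lra.
    - intros s0 Hs0. destruct (Fcont s0 p ltac:(lra) (e/2) ltac:(lra)) as [d1 [Hd1 H1]].
      exists (d1/2). split; [lra|]. intros [d2 [Hd2 H2]].
      exists (Rmin d1 d2). split; [apply Rmin_glb_lt; auto|].
      intros t Ht z Hz. pose proof (Rmin_l d1 d2). pose proof (Rmin_r d1 d2).
      destruct (Rle_lt_dec t (s0 - d1/2)) as [Hts|Hts].
      + apply H2; auto. lra. lra.
      + assert (Ha : Rabs (t - s0) < d1) by (apply Rabs_def1; lra).
        pose proof (H1 t z ltac:(lra) Ha ltac:(lra)) as T1.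
        pose proof (H1 t p ltac:(lra) Ha ltac:(rewrite d_refl; lra)) as T2.
        pose proof (d_tri (F t z) (F s0 p) (F t p)) as T3. rewrite (d_sym (F s0 p)) in T3. lra. }
  destruct P1 as [dl [Hdl H]]. exists dl. split; auto.
Qed.

Lemma Qorbit : forall x M e, 0 <= M -> 0 < e -> exists dl, 0 < dl /\
  forall s, 0 <= s <= M -> forall t, 0 <= t <= 1 -> forall z, d z (F s x) < dl ->
  d (F t z) (F t (F s x)) < e.
Proof.
  intros x M e HM He.
  set (P := fun s1 => exists dl, 0 < dl /\ forall s, 0 <= s <= s1 -> forall t, 0 <= t <= 1 -> forall z,
     d z (F s x) < dl -> d (F t z) (F t (F s x)) < e).
  assert (PM : P M).
  { apply real_ind; auto.
    - intros s Hs. exists 1. split; [lra|]. intros. lra.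
    - intros s s' Hss [dl [Hdl H]]. exists dl. split; auto. intros. apply H; auto; lra.
    - intros s0 Hs0. destruct (Qp (F s0 x) (e/2) ltac:(lra)) as [dq [Hdq Hq]].
      destruct (Fcont s0 x ltac:(lra) (dq/2) ltac:(lra)) as [d1 [Hd1 H1]].
      exists (d1/2). split; [lra|]. intros [d2 [Hd2 H2]].
      exists (Rmin d2 (dq/2)). split; [apply Rmin_glb_lt; lra|].
      intros s Hs t Ht z Hz. pose proof (Rmin_l d2 (dq/2)). pose proof (Rmin_r d2 (dq/2)).
      destruct (Rle_lt_dec s (s0 - d1/2)) as [Hss|Hss].
      + apply H2; auto; lra.
      + assert (Ha : Rabs (s - s0) < d1) by (apply Rabs_def1; lra).
        pose proof (H1 s x ltac:(lra) Ha ltac:(rewrite d_refl; lra)) as Hsx.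
        pose proof (d_tri z (F s x) (F s0 x)) as T1.
        pose proof (Hq t Ht z ltac:(lra)) as T2.
        pose proof (Hq t Ht (F s x) ltac:(lra)) as T3.
        pose proof (d_tri (F t z) (F t (F s0 x)) (F t (F s x))) as T4.
        rewrite (d_sym (F t (F s0 x))) in T4. lra. }
  destruct PM as [dl [Hdl H]]. exists dl. split; auto.
Qed.

Lemma track : forall x M, 0 <= M -> forall k e, 0 < e -> exists eta, 0 < eta /\
  forall n z h, z 0%nat = x ->
  (forall j, (j < n)%nat -> 1/2 <= h j <= 1 /\ d (F (h j) (z j)) (z (S j)) < eta) ->
  (k <= n)%nat -> Hs h k <= M -> d (z k) (F (Hs h k) x) < e.
Proof.
  intros x M HM k. induction k as [|k IH]; intros e He.
  - exists 1. split; [lra|]. intros n z h Z0 _ _ _. simpl. rewrite F0, Z0, d_refl. auto.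
  - destruct (Qorbit x M (e/2) HM ltac:(lra)) as [dq [Hdq Hq]].
    destruct (IH dq Hdq) as [e1 [He1 H1]].
    exists (Rmin e1 (e/2)). split; [apply Rmin_glb_lt; lra|].
    intros n z h Z0 Hst Hk HkM.
    pose proof (Rmin_l e1 (e/2)). pose proof (Rmin_r e1 (e/2)).
    assert (Hst1 : forall j, (j < n)%nat -> 1/2 <= h j <= 1 /\ d (F (h j) (z j)) (z (S j)) < e1).
    { intros j Hj. destruct (Hst j Hj). split; auto. lra. }
    destruct (Hst k ltac:(lia)) as [[hk1 hk2] hkd].
    assert (Hk0 : 0 <= Hs h k).
    { pose proof (Hs_mono _ _ _ _ Hst 0 k ltac:(lia)) as T0. simpl in T0. auto. }
    cbn [Hs] in HkM.
    specialize (H1 n z h Z0 Hst1 ltac:(lia) ltac:(lra)).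
    pose proof (Hq (Hs h k) ltac:(lra) (h k) ltac:(lra) (z k) H1) as T1.
    cbn [Hs]. rewrite Rplus_comm, Fsg by lra.
    pose proof (d_tri (z (S k)) (F (h k) (z k)) (F (h k) (F (Hs h k) x))) as T2.
    rewrite (d_sym (z (S k)) (F (h k) (z k))) in T2. lra.
Qed.

Lemma track_unif : forall x M, 0 <= M -> forall K e, 0 < e -> exists eta, 0 < eta /\
  forall n z h, z 0%nat = x ->
  (forall j, (j < n)%nat -> 1/2 <= h j <= 1 /\ d (F (h j) (z j)) (z (S j)) < eta) ->
  forall k, (k <= K)%nat -> (k <= n)%nat -> Hs h k <= M -> d (z k) (F (Hs h k) x) < e.
Proof.
  intros x M HM K. induction K as [|K IH]; intros e He.
  - destruct (track x M HM 0 e He) as [eta [Heta H]]. exists eta. split; auto.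
    intros n z h Z0 Hst k Hk. assert (k = 0%nat) by lia. subst. apply (H n); auto.
  - destruct (track x M HM (S K) e He) as [eta1 [Heta1 H1]].
    destruct (IH e He) as [eta2 [Heta2 H2]].
    exists (Rmin eta1 eta2). split; [apply Rmin_glb_lt; auto|].
    intros n z h Z0 Hst k Hk Hkn HkM.
    pose proof (Rmin_l eta1 eta2). pose proof (Rmin_r eta1 eta2).
    destruct (Nat.eq_dec k (S K)) as [->|Hne].
    + apply (H1 n); auto. intros j Hj. destruct (Hst j Hj). split; auto. lra.
    + apply (H2 n); auto; [|lia]. intros j Hj. destruct (Hst j Hj). split; auto. lra.
Qed.

Lemma loop_G : forall x, loop x -> G x.
Proof.
  intros x Hl. apply (compact_closed G x G_compact). intros e He.
  set (e1 := Rmin e e0). assert (He1 : 0 < e1) by (apply Rmin_glb_lt; auto).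
  assert (He1a : e1 <= e) by apply Rmin_l. assert (He1b : e1 <= e0) by apply Rmin_r.
  destruct (stayB e1 He1 He1b) as [etaB [d0 [HetaB [Hd0 HB]]]].
  destruct (attr_single x (d0/2) ltac:(lra)) as [Tx [HTx Hx]].
  destruct (nat_above (2 * (Tx + 1))) as [K HK].
  destruct (track_unif x (Tx + 1) ltac:(lra) K (d0/2) ltac:(lra)) as [etaT [HetaT HT]].
  set (eta := Rmin etaB etaT).
  assert (Heta : 0 < eta) by (apply Rmin_glb_lt; auto).
  assert (Ha : eta <= etaB) by apply Rmin_l. assert (Hb : eta <= etaT) by apply Rmin_r.
  destruct (nat_above (2 * Tx)) as [k Hk].
  destruct (loops_long x Hl eta Heta k) as [n [z [h [HD Hkn]]]].
  pose proof HD as [Z0 [Zn Hst]].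
  destruct (find_fwd _ _ _ _ Hst Tx 0 n HTx ltac:(lia) ltac:(simpl; lra)) as [m [Hm1 [Hm2 Hm3]]].
  simpl in Hm2, Hm3. rewrite Rminus_0_r in Hm2, Hm3.
  pose proof (Hs_lb _ _ _ _ Hst m 0 ltac:(lia)) as Hl0. cbn [Nat.add Hs] in Hl0. rewrite Rminus_0_r in Hl0.
  assert (HmK : (m <= K)%nat).
  { destruct (Compare_dec.le_lt_dec m K) as [h'|h']; auto. apply lt_INR in h'. lra. }
  assert (Hd1 : d (z m) (F (Hs h m) x) < d0/2).
  { apply (HT n z h Z0); auto; try lia; try lra. intros j Hj. destruct (Hst j Hj). split; auto. lra. }
  destruct (Hx (Hs h m) ltac:(lra)) as [g [Hg Hdg]].
  pose proof (d_tri (z m) (F (Hs h m) x) g).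
  pose proof (DC_shift eta x x n z h m HD ltac:(lia)) as HDs.
  assert (HDs' : DC etaB (z m) x (n - m) (fun j => z (m + j)%nat) (fun j => h (m + j)%nat)).
  { destruct HDs as [A [B C]]. split; auto. split; auto. intros j Hj. destruct (C j Hj). split; auto. lra. }
  pose proof (HB _ _ _ _ _ g HDs' Hg ltac:(lra) (n - m)%nat ltac:(lia)) as Hfin.
  cbv beta in Hfin. replace (m + (n - m))%nat with n in Hfin by lia. rewrite Zn in Hfin.
  apply (nbhd_mono e1); auto.
Qed.

Lemma rec_loop : forall x, chain_recurrent F (shadow_succ d F) x -> loop x.
Proof.
  intros x [Hfix|[y [Hxy Hyx]]] eta Heta.
  - exists 1%nat, (fun _ => x), (fun _ => 1). split; [split; [|split]|]; auto.
    intros j Hj. split; [lra|]. rewrite Hfix by lra. rewrite d_refl. auto.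
  - destruct (discretize eta x y (Hxy eta Heta)) as [n1 [z1 [h1 [HD1 Hn1]]]].
    destruct (discretize eta y x (Hyx eta Heta)) as [n2 [z2 [h2 [HD2 Hn2]]]].
    destruct (DC_concat _ _ _ _ _ _ _ _ _ _ HD1 HD2) as [z [h [HD _]]].
    exists (n1 + n2)%nat, z, h. split; auto. lia.
Qed.


Lemma rec_equiv : forall x, chain_recurrent F (conley_succ d F) x <-> chain_recurrent F (shadow_succ d F) x.
Proof.
  intro x. split.
  - intros [Hfix|[y [Hxy Hyx]]]; [left; auto|right]. exists y.
    split; apply CS; auto; [apply (conley_to_G y x)|apply (conley_to_G x y)]; auto.
  - intros Hr. pose proof Hr as [Hfix|[y [Hxy Hyx]]]; [left; auto|right]. exists y.
    assert (Ly : loop y) by (apply rec_loop; right; exists x; auto).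
    assert (Lx : loop x) by (apply rec_loop; auto).
    split; apply SC; auto; apply loop_G; auto.
Qed.

Lemma succ_equiv : forall x y, chain_recurrent F (conley_succ d F) x ->
  chain_recurrent F (conley_succ d F) y -> (conley_succ d F x y <-> shadow_succ d F x y).
Proof.
  intros x y Hx Hy. split.
  - apply CS. apply recC_G; auto.
  - apply SC. apply recC_G; auto. apply rec_loop. apply rec_equiv; auto.
Qed.

End Main.

Section Generic.
Context {X : Type} (F : R -> X -> X) (s1 s2 : X -> X -> Prop).
Hypothesis H1 : forall x, chain_recurrent F s1 x <-> chain_recurrent F s2 x.
Hypothesis H2 : forall x y, chain_recurrent F s1 x -> chain_recurrent F s1 y -> (s1 x y <-> s2 x y).

Lemma mut_equiv : forall M : X -> Prop, (forall x, M x -> chain_recurrent F s1 x) ->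
  (mutually_equiv s1 M <-> mutually_equiv s2 M).
Proof.
  intros M HM. split; intros H x y Hx Hy; destruct (H x y Hx Hy);
  split; apply H2 in H0 || apply H2; auto; try apply H2; auto.
Qed.

Lemma node_equiv : forall M, is_node F s1 M <-> is_node F s2 M.
Proof.
  intro M. split.
  - intros [HR [HE Hmax]].
    assert (HR2 : forall x, M x -> chain_recurrent F s2 x) by (intros; apply H1; auto).
    split; auto. split; [apply mut_equiv; auto|].
    intros M' Hsub HR' HE' x Hx. apply (Hmax M'); auto.
    + intros; apply H1; auto.
    + apply mut_equiv; auto. intros; apply H1; auto.
  - intros [HR [HE Hmax]].
    assert (HR1 : forall x, M x -> chain_recurrent F s1 x) by (intros; apply H1; auto).
    split; auto. split; [apply mut_equiv; auto|].
    intros M' Hsub HR' HE' x Hx. apply (Hmax M'); auto.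
    + intros; apply H1; auto.
    + apply mut_equiv; auto.
Qed.

Lemma edge_equiv : forall M N, graph_edge F s1 M N <-> graph_edge F s2 M N.
Proof.
  intros M N. split.
  - intros [HM [HN [x [y [Hx [Hy Hxy]]]]]].
    split; [apply node_equiv; auto|]. split; [apply node_equiv; auto|].
    exists x, y. split; auto. split; auto. apply H2; auto.
    destruct HM as [HR _]; auto. destruct HN as [HR _]; auto.
  - intros [HM [HN [x [y [Hx [Hy Hxy]]]]]].
    apply node_equiv in HM. apply node_equiv in HN.
    split; auto. split; auto.
    exists x, y. split; auto. split; auto. apply H2; auto.
    destruct HM as [HR _]; auto. destruct HN as [HR _]; auto.
Qed.

End Generic.

Theorem mainTheorem1 (X : Type) (d : X -> X -> R) (F : R -> X -> X)
  (Hd : is_metric d) (HF : is_semiflow d F)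
  (Hscd : strong_compact_dynamics d F) :
  (forall x, chain_recurrent F (conley_succ d F) x <->
             chain_recurrent F (shadow_succ d F) x) /\
  (forall x y, chain_recurrent F (conley_succ d F) x ->
               chain_recurrent F (conley_succ d F) y ->
               (conley_succ d F x y <-> shadow_succ d F x y)) /\
  (forall M : X -> Prop, is_node F (conley_succ d F) M <-> is_node F (shadow_succ d F) M) /\
  ((forall M : X -> Prop, graph_vertex F (conley_succ d F) M <->
                          graph_vertex F (shadow_succ d F) M) /\
   (forall M N : X -> Prop, graph_edge F (conley_succ d F) M N <->
                            graph_edge F (shadow_succ d F) M N)).
Proof.
  destruct Hscd as [G [HG [e0 [He0 [Hatt HUC]]]]].
  assert (A1 : forall x, chain_recurrent F (conley_succ d F) x <-> chain_recurrent F (shadow_succ d F) x).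
  { intro x. eapply rec_equiv; eauto. }
  assert (A2 : forall x y, chain_recurrent F (conley_succ d F) x ->
               chain_recurrent F (conley_succ d F) y ->
               (conley_succ d F x y <-> shadow_succ d F x y)).
  { intros x y. eapply succ_equiv; eauto. }
  split; auto. split; auto. split; [|split].
  - apply node_equiv; auto.
  - unfold graph_vertex. apply node_equiv; auto.
  - apply edge_equiv; auto.
Qed.
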